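(* Let $J\subset(0,\infty)$ be an open interval and let $u:J\to\mathbb{R}$ be a smooth function with $u'(\alpha)\neq 0$ for all $\alpha\in J$. The rotational surface in $(\mathbb{R}^3,\|\cdot\|)$ given by $\bar f(\alpha,v)=(\alpha\cos v,\ \alpha\sin v,\ u(\alpha))$ is minimal if and only if there are constants $c_2>0$ and $c_3\in\mathbb{R}$ and a fixed choice of sign such that $J\subset(c_2,\infty)$ and $$u(\alpha)=\pm\int_{c_2}^{\alpha}\frac{c_2^{2m-1}}{\left(\rho^{2m}-c_2^{2m}\right)^{\frac{2m-1}{2m}}}\,d\rho+c_3\qquad(\alpha\in J).$$
   Context: Fix an integer $m\ge 2$. Let $\Phi(x_1,x_2,x_3)=(x_1^2+x_2^2)^m+x_3^{2m}$ and let $\|\cdot\|$ be the norm on $\mathbb{R}^3$ whose unit sphere is $S=\{x\in\mathbb{R}^3:\Phi(x)=1\}$ (a smooth, strictly convex surface). For a surface given by a parametrization $f(s,v)$, its Birkhoff–Gauss map $\eta$ is the map into $S$ defined by requiring $\eta\in S$ and $\nabla\Phi(\eta)=\mu\, f_s\times f_v$ for some function $\mu>0$, where $\times$ is the standard cross product (so the tangent plane of $S$ at $\eta(p)$ is parallel to $T_pM$, and $d\eta_p$ is an endomorphism of $T_pM$). The Minkowski mean curvature is $H=\tfrac12\operatorname{trace}(d\eta_p)$, and the surface is minimal if $H\equiv 0$ (this condition does not depend on the orientation). *)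

(* Defs.v *)
From Stdlib Require Import Reals Lra.
From Coquelicot Require Import Coquelicot.
Open Scope R_scope.

Record V3 := mkV { c1 : R; c2 : R; c3 : R }.

Definition vadd (x y : V3) : V3 := mkV (c1 x + c1 y) (c2 x + c2 y) (c3 x + c3 y).
Definition vscale (a : R) (x : V3) : V3 := mkV (a * c1 x) (a * c2 x) (a * c3 x).
Definition cross (x y : V3) : V3 :=
  mkV (c2 x * c3 y - c3 x * c2 y)
      (c3 x * c1 y - c1 x * c3 y)
      (c1 x * c2 y - c2 x * c1 y).

(* Phi(x) = (x1^2 + x2^2)^m + x3^(2m); its unit level set is the unit sphere
   of the norm. *)
Definition Phi (m : nat) (x : V3) : R :=
  (c1 x ^ 2 + c2 x ^ 2) ^ m + c3 x ^ (2 * m).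

Definition gradPhi (m : nat) (x : V3) : V3 :=
  mkV (Derive (fun t => Phi m (mkV t (c2 x) (c3 x))) (c1 x))
      (Derive (fun t => Phi m (mkV (c1 x) t (c3 x))) (c2 x))
      (Derive (fun t => Phi m (mkV (c1 x) (c2 x) t)) (c3 x)).

Definition partial_s (F : R -> R -> V3) (s v : R) : V3 :=
  mkV (Derive (fun t => c1 (F t v)) s)
      (Derive (fun t => c2 (F t v)) s)
      (Derive (fun t => c3 (F t v)) s).
Definition partial_v (F : R -> R -> V3) (s v : R) : V3 :=
  mkV (Derive (fun t => c1 (F s t)) v)
      (Derive (fun t => c2 (F s t)) v)
      (Derive (fun t => c3 (F s t)) v).

Definition has_partials (F : R -> R -> V3) (s v : R) : Prop :=
  ex_derive (fun t => c1 (F t v)) s /\ ex_derive (fun t => c2 (F t v)) s /\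
  ex_derive (fun t => c3 (F t v)) s /\
  ex_derive (fun t => c1 (F s t)) v /\ ex_derive (fun t => c2 (F s t)) v /\
  ex_derive (fun t => c3 (F s t)) v.

Definition is_BG_map (m : nat) (f : R -> R -> V3) (D : R -> R -> Prop)
  (eta : R -> R -> V3) : Prop :=
  forall s v, D s v ->
    Phi m (eta s v) = 1 /\
    exists mu, 0 < mu /\
      gradPhi m (eta s v) = vscale mu (cross (partial_s f s v) (partial_v f s v)).

(* Minkowski mean curvature vanishes at (s,v): d eta_p is the endomorphism of
   T_pM = span(f_s, f_v) with eta_s = a f_s + b f_v, eta_v = c f_s + d f_v,
   and H = trace/2 = (a + d)/2 = 0. *)
Definition mean_curv_zero_at (f eta : R -> R -> V3) (s v : R) : Prop :=
  has_partials eta s v /\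
  exists a b c d : R,
    partial_s eta s v = vadd (vscale a (partial_s f s v)) (vscale b (partial_v f s v)) /\
    partial_v eta s v = vadd (vscale c (partial_s f s v)) (vscale d (partial_v f s v)) /\
    (a + d) / 2 = 0.

Definition BG_minimal (m : nat) (f : R -> R -> V3) (D : R -> R -> Prop) : Prop :=
  forall eta, is_BG_map m f D eta ->
    forall s v, D s v -> mean_curv_zero_at f eta s v.

Definition rot_surface (u : R -> R) (alpha v : R) : V3 :=
  mkV (alpha * cos v) (alpha * sin v) (u alpha).

Definition integrand (m : nat) (c rho : R) : R :=
  c ^ (2 * m - 1) /
  Rpower (rho ^ (2 * m) - c ^ (2 * m)) ((INR (2 * m) - 1) / INR (2 * m)).

(* Main.v *)
Require Import Defs.
From Stdlib Require Import Reals Lra Lia.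
From Coquelicot Require Import Coquelicot.
Open Scope R_scope.

Lemma gradPhi_eq m X : gradPhi m X =
  mkV (2 * INR m * (Defs.c1 X ^ 2 + c2 X ^ 2) ^ (pred m) * Defs.c1 X)
      (2 * INR m * (Defs.c1 X ^ 2 + c2 X ^ 2) ^ (pred m) * c2 X)
      (INR (2 * m) * c3 X ^ (pred (2 * m))).
Proof.
unfold gradPhi; f_equal; apply is_derive_unique; unfold Phi; simpl;
  auto_derive; auto; simpl; ring.
Qed.

Lemma pow_lt_nonneg n x y : 0 <= x < y -> x ^ (S n) < y ^ (S n).
Proof.
intros [h0 h1]. induction n.
- simpl; lra.
- assert (0 <= x ^ S n) by (apply pow_le; lra).
  change (x * x ^ S n < y * y ^ S n).
  apply Rle_lt_trans with (x * y ^ S n).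
  + apply Rmult_le_compat_l; lra.
  + apply Rmult_lt_compat_r; [apply pow_lt; lra | lra].
Qed.

Lemma pow_opp_odd k x : (- x) ^ (2 * k + 1) = - (x ^ (2 * k + 1)).
Proof.
replace (- x) with ((-1) * x) by ring. rewrite Rpow_mult_distr.
replace (2 * k + 1)%nat with (S (2 * k)) by lia. rewrite pow_1_odd. ring.
Qed.

Lemma pow_odd_lt k x y : x < y -> x ^ (2 * k + 1) < y ^ (2 * k + 1).
Proof.
intros h. replace (2 * k + 1)%nat with (S (2 * k)) by lia.
destruct (Rle_dec 0 x).
- apply pow_lt_nonneg; lra.
- destruct (Rle_dec 0 y).
  + apply Rlt_le_trans with 0.
    * replace (S (2 * k)) with (2 * k + 1)%nat by lia.
      rewrite <- (Ropp_involutive x), pow_opp_odd.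
      replace (2 * k + 1)%nat with (S (2 * k)) by lia.
      assert (0 < (- x) ^ S (2 * k)) by (apply pow_lt; lra). lra.
    * apply pow_le; lra.
  + assert ((- y) ^ S (2 * k) < (- x) ^ S (2 * k)) by (apply pow_lt_nonneg; lra).
    replace (S (2 * k)) with (2 * k + 1)%nat in * by lia.
    rewrite !pow_opp_odd in H. lra.
Qed.

Lemma pow_odd_inj k x y : x ^ (2 * k + 1) = y ^ (2 * k + 1) -> x = y.
Proof.
intros h. destruct (Rtotal_order x y) as [h1|[h1|h1]]; auto.
- apply (pow_odd_lt k) in h1; lra.
- apply (pow_odd_lt k) in h1; lra.
Qed.

Lemma pow_pos_inj n x y : 0 < x -> 0 < y -> x ^ (S n) = y ^ (S n) -> x = y.
Proof.
intros hx hy h. destruct (Rtotal_order x y) as [h1|[h1|h1]]; auto.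
- assert (x ^ S n < y ^ S n) by (apply pow_lt_nonneg; lra). lra.
- assert (y ^ S n < x ^ S n) by (apply pow_lt_nonneg; lra). lra.
Qed.

Lemma odd_exp m : (1 <= m)%nat -> pred (2 * m) = (2 * pred m + 1)%nat.
Proof. intros; lia. Qed.

Lemma pow_sq_pred m T : (1 <= m)%nat -> (T ^ 2) ^ (pred m) * T = T ^ (pred (2 * m)).
Proof.
intros hm. rewrite <- pow_mult. rewrite <- (pow_1 T) at 2. rewrite <- pow_add.
f_equal. lia.
Qed.

Lemma pow_2m_split m T : (1 <= m)%nat -> T ^ (2 * m) = T ^ (pred (2 * m)) * T.
Proof.
intros hm. rewrite <- (pow_1 T) at 3. rewrite <- pow_add. f_equal. lia.
Qed.

Lemma pow_odd_neg m Z : (1 <= m)%nat -> Z <= 0 -> Z ^ (pred (2 * m)) <= 0.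
Proof.
intros hm hz. rewrite odd_exp by auto. destruct (Req_dec Z 0).
- subst. rewrite pow_i by lia. lra.
- assert (Z ^ (2 * pred m + 1) < 0 ^ (2 * pred m + 1)) by (apply pow_odd_lt; lra).
  rewrite pow_i in H0 by lia. lra.
Qed.

Lemma pow_odd_pos m Z : (1 <= m)%nat -> 0 < Z ^ (pred (2 * m)) -> 0 < Z.
Proof.
intros hm h. destruct (Rle_dec Z 0); [|lra].
pose proof (pow_odd_neg m Z hm r). lra.
Qed.

Lemma TZ_unique m p T Z T' Z' : (1 <= m)%nat ->
  T ^ (2 * m) + Z ^ (2 * m) = 1 -> T ^ (pred (2*m)) = - Z ^ (pred (2*m)) * p -> 0 < Z ->
  T' ^ (2 * m) + Z' ^ (2 * m) = 1 -> T' ^ (pred (2*m)) = - Z' ^ (pred (2*m)) * p -> 0 < Z' ->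
  T = T' /\ Z = Z'.
Proof.
intros hm h1 h2 h3 h1' h2' h3'.
assert (eT : T = Z * (T' / Z')).
{ rewrite odd_exp in * by auto. apply (pow_odd_inj (pred m)).
  rewrite h2. unfold Rdiv. rewrite !Rpow_mult_distr, pow_inv, h2'.
  field. apply pow_nonzero; lra. }
assert (eZ : Z = Z').
{ assert (hZ : Z ^ (2 * m) * (1 + (T' / Z') ^ (2 * m)) = Z' ^ (2 * m) * (1 + (T' / Z') ^ (2 * m))).
  { unfold Rdiv. rewrite Rpow_mult_distr, pow_inv.
    replace (Z' ^ (2 * m) * (1 + T' ^ (2 * m) * / Z' ^ (2 * m))) with (Z' ^ (2 * m) + T' ^ (2*m))
      by (field; apply pow_nonzero; lra).
    rewrite eT in h1. rewrite Rpow_mult_distr in h1.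
    unfold Rdiv in h1. rewrite Rpow_mult_distr, pow_inv in h1. lra. }
  assert (0 < 1 + (T' / Z') ^ (2 * m)).
  { rewrite pow_mult. pose proof (pow_le ((T'/Z')^2) m). assert (0 <= (T'/Z')^2) by nra. 
    specialize (H H0). lra. }
  apply Rmult_eq_reg_r in hZ; [|lra].
  replace (2 * m)%nat with (S (pred (2 * m))) in hZ by lia.
  apply pow_pos_inj in hZ; auto. }
subst Z'. split; auto. rewrite eT. field. lra.
Qed.

Lemma cross_rot s v p : cross (mkV (cos v) (sin v) p) (mkV (- s * sin v) (s * cos v) 0)
  = mkV (- p * s * cos v) (- p * s * sin v) s.
Proof.
unfold cross; simpl. f_equal; try ring.
pose proof (sin2_cos2 v). unfold Rsqr in H.
transitivity (s * (sin v * sin v + cos v * cos v)); [ring | rewrite H; ring].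
Qed.

Lemma INR2m m : INR (2 * m) = 2 * INR m.
Proof. rewrite mult_INR. simpl. ring. Qed.

Lemma BG_point m s v p X : (1 <= m)%nat -> 0 < s -> p <> 0 ->
  (Phi m X = 1 /\ exists mu, 0 < mu /\
     gradPhi m X = vscale mu (mkV (- p * s * cos v) (- p * s * sin v) s))
  <-> exists T Z, X = mkV (T * cos v) (T * sin v) Z /\ T ^ (2 * m) + Z ^ (2 * m) = 1 /\
       T ^ (pred (2 * m)) = - Z ^ (pred (2 * m)) * p /\ 0 < Z.
Proof.
intros hm hs hp. pose proof (sin2_cos2 v) as hsc. unfold Rsqr in hsc.
assert (hmpos : 0 < INR m) by (apply lt_0_INR; lia).
split.
- destruct X as [x y z]. intros [hphi [mu [hmu hg]]].
  rewrite gradPhi_eq in hg. unfold vscale in hg. cbn [Defs.c1 c2 c3] in hg.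
  pose proof (f_equal Defs.c1 hg) as e1. pose proof (f_equal c2 hg) as e2.
  pose proof (f_equal c3 hg) as e3. cbn [Defs.c1 c2 c3] in e1, e2, e3. clear hg.
  rewrite INR2m in e3. unfold Phi in hphi; cbn [Defs.c1 c2 c3] in hphi.
  set (N := pred (2 * m)) in *. set (P := pred m) in *.
  assert (hzN : 0 < z ^ N).
  { assert (0 < mu * s) by (apply Rmult_lt_0_compat; lra). nra. }
  assert (hz : 0 < z) by (apply (pow_odd_pos m); auto).
  set (K := - z ^ N * p).
  assert (hK : K <> 0).
  { unfold K. intro h. assert (z ^ N * p = 0) by lra. apply Rmult_integral in H. lra. }
  set (rho := x ^ 2 + y ^ 2) in *.
  assert (ex : rho ^ P * x = K * cos v).
  { unfold K. apply Rmult_eq_reg_l with (2 * INR m); [|lra].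
    replace (2 * INR m * (rho ^ P * x)) with (2 * INR m * rho ^ P * x) by ring.
    rewrite e1. replace (mu * (- p * s * cos v)) with (- p * cos v * (mu * s)) by ring.
    rewrite <- e3. ring. }
  assert (ey : rho ^ P * y = K * sin v).
  { unfold K. apply Rmult_eq_reg_l with (2 * INR m); [|lra].
    replace (2 * INR m * (rho ^ P * y)) with (2 * INR m * rho ^ P * y) by ring.
    rewrite e2. replace (mu * (- p * s * sin v)) with (- p * sin v * (mu * s)) by ring.
    rewrite <- e3. ring. }
  assert (hr : rho ^ P <> 0).
  { intro h. rewrite h in ex, ey.
    assert (h1 : K * cos v = 0) by lra. assert (h2 : K * sin v = 0) by lra.
    apply Rmult_integral in h1, h2. destruct h1, h2; try lra.
    rewrite H, H0 in hsc. lra. }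
  set (T := K / rho ^ P).
  assert (hx : x = T * cos v) by (unfold T; field_simplify; [rewrite <- ex; field|]; auto).
  assert (hy : y = T * sin v) by (unfold T; field_simplify; [rewrite <- ey; field|]; auto).
  assert (hrho : rho = T ^ 2).
  { unfold rho. rewrite hx, hy.
    transitivity (T ^ 2 * (sin v * sin v + cos v * cos v)); [ring | rewrite hsc; ring]. }
  assert (hTN : T ^ N = K).
  { unfold N. rewrite <- pow_sq_pred by auto. fold P. rewrite <- hrho. unfold T. field. auto. }
  exists T, z. split; [rewrite <- hx, <- hy; reflexivity|]. split; [|split; auto].
  rewrite <- hphi. fold rho. rewrite hrho. rewrite <- pow_mult. reflexivity.
- intros [T [Z [hX [h1 [h2 h3]]]]]. subst X. split.
  + unfold Phi; cbn [Defs.c1 c2 c3]. rewrite <- h1. f_equal.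
    rewrite pow_mult. f_equal.
    transitivity (T ^ 2 * (sin v * sin v + cos v * cos v)); [ring | rewrite hsc; ring].
  + exists (INR (2 * m) * Z ^ (pred (2 * m)) / s). split.
    * apply Rdiv_lt_0_compat; auto. apply Rmult_lt_0_compat.
      rewrite INR2m; lra. apply pow_lt; auto.
    * rewrite gradPhi_eq. unfold vscale; cbn [Defs.c1 c2 c3].
      assert (hr : (T * cos v) ^ 2 + (T * sin v) ^ 2 = T ^ 2).
      { transitivity (T ^ 2 * (sin v * sin v + cos v * cos v)); [ring | rewrite hsc; ring]. }
      rewrite hr. rewrite INR2m. f_equal.
      -- replace (2 * INR m * (T ^ 2) ^ pred m * (T * cos v)) with (2 * INR m * ((T ^ 2) ^ pred m * T) * cos v) by ring.
         rewrite pow_sq_pred, h2 by auto. field. lra.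
      -- replace (2 * INR m * (T ^ 2) ^ pred m * (T * sin v)) with (2 * INR m * ((T ^ 2) ^ pred m * T) * sin v) by ring.
         rewrite pow_sq_pred, h2 by auto. field. lra.
      -- field. lra.
Qed.

Lemma ps_rot u s v : partial_s (rot_surface u) s v = mkV (cos v) (sin v) (Derive u s).
Proof.
unfold partial_s, rot_surface; cbn [Defs.c1 c2 c3]. f_equal;
  apply is_derive_unique; auto_derive; auto; ring.
Qed.

Lemma pv_rot u s v : partial_v (rot_surface u) s v = mkV (- s * sin v) (s * cos v) 0.
Proof.
unfold partial_v, rot_surface; cbn [Defs.c1 c2 c3]. f_equal;
  apply is_derive_unique; auto_derive; auto; ring.
Qed.

Lemma BG_rot m u s v X : (1 <= m)%nat -> 0 < s -> Derive u s <> 0 ->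
  (Phi m X = 1 /\ exists mu, 0 < mu /\
     gradPhi m X = vscale mu (cross (partial_s (rot_surface u) s v) (partial_v (rot_surface u) s v)))
  <-> exists T Z, X = mkV (T * cos v) (T * sin v) Z /\ T ^ (2 * m) + Z ^ (2 * m) = 1 /\
       T ^ (pred (2 * m)) = - Z ^ (pred (2 * m)) * Derive u s /\ 0 < Z.
Proof.
intros. rewrite ps_rot, pv_rot, cross_rot. apply BG_point; auto.
Qed.

Lemma ps_eta (eta : R -> R -> V3) T Z s v :
  locally s (fun r => forall w, eta r w = mkV (T r * cos w) (T r * sin w) (Z r)) ->
  partial_s eta s v = mkV (Derive T s * cos v) (Derive T s * sin v) (Derive Z s).
Proof.
intros hl. unfold partial_s. f_equal.
- rewrite (Derive_ext_loc _ (fun r => T r * cos v)). apply Derive_scal_l.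
  eapply filter_imp; [|exact hl]; intros r hr; simpl. rewrite hr. reflexivity.
- rewrite (Derive_ext_loc _ (fun r => T r * sin v)). apply Derive_scal_l.
  eapply filter_imp; [|exact hl]; intros r hr; simpl. rewrite hr. reflexivity.
- apply Derive_ext_loc.
  eapply filter_imp; [|exact hl]; intros r hr; simpl. rewrite hr. reflexivity.
Qed.

Lemma pv_eta (eta : R -> R -> V3) T Z s v :
  (forall w, eta s w = mkV (T * cos w) (T * sin w) Z) ->
  partial_v eta s v = mkV (- T * sin v) (T * cos v) 0.
Proof.
intros hl. unfold partial_v. f_equal.
- rewrite (Derive_ext _ (fun w => T * cos w)) by (intro w; rewrite hl; reflexivity).
  apply is_derive_unique; auto_derive; auto; ring.
- rewrite (Derive_ext _ (fun w => T * sin w)) by (intro w; rewrite hl; reflexivity).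
  apply is_derive_unique; auto_derive; auto; ring.
- rewrite (Derive_ext _ (fun w => Z)) by (intro w; rewrite hl; reflexivity).
  apply Derive_const.
Qed.

Lemma mc_lemma u (eta : R -> R -> V3) T Z s v : 0 < s -> Derive u s <> 0 ->
  locally s (fun r => forall w, eta r w = mkV (T r * cos w) (T r * sin w) (Z r)) ->
  ex_derive T s -> ex_derive Z s ->
  Derive Z s = Derive u s * Derive T s ->
  (mean_curv_zero_at (rot_surface u) eta s v <-> Derive T s + T s / s = 0).
Proof.
intros hs hp hl hT hZ hZT.
pose proof (sin2_cos2 v) as hsc. unfold Rsqr in hsc.
assert (h0 : forall w, eta s w = mkV (T s * cos w) (T s * sin w) (Z s)) by
  (apply locally_singleton in hl; exact hl).
unfold mean_curv_zero_at. rewrite (ps_eta eta T Z s v hl), (pv_eta eta (T s) (Z s) s v h0),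
  ps_rot, pv_rot. split.
- intros [_ [a [b [c [d [e1 [e2 e3]]]]]]].
  unfold vadd, vscale in e1, e2. cbn [Defs.c1 c2 c3] in e1, e2.
  pose proof (f_equal Defs.c1 e1) as e11. pose proof (f_equal c2 e1) as e12.
  pose proof (f_equal Defs.c1 e2) as e21. pose proof (f_equal c2 e2) as e22.
  pose proof (f_equal c3 e2) as e23. cbn [Defs.c1 c2 c3] in e11, e12, e21, e22, e23.
  assert (hc : c = 0).
  { assert (c * Derive u s = 0) by lra. apply Rmult_integral in H; destruct H; auto; lra. }
  subst c.
  assert (ha : Derive T s = a).
  { transitivity (Derive T s * (sin v * sin v + cos v * cos v)); [rewrite hsc; ring|].
    transitivity ((Derive T s * cos v) * cos v + (Derive T s * sin v) * sin v); [ring|].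
    rewrite e11, e12. transitivity (a * (sin v * sin v + cos v * cos v)); [ring | rewrite hsc; ring]. }
  assert (hd : T s = d * s).
  { transitivity (T s * (sin v * sin v + cos v * cos v)); [rewrite hsc; ring|].
    transitivity ((T s * cos v) * cos v - (- T s * sin v) * sin v); [ring|].
    rewrite e21, e22. transitivity (d * s * (sin v * sin v + cos v * cos v)); [ring | rewrite hsc; ring]. }
  rewrite ha, hd. field_simplify; lra.
- intros h. split.
  + unfold has_partials. repeat split.
    * apply (ex_derive_ext_loc (fun r => T r * cos v)).
      eapply filter_imp; [|exact hl]; intros r hr; simpl. rewrite hr. reflexivity.
      apply ex_derive_mult; auto. apply ex_derive_const.
    * apply (ex_derive_ext_loc (fun r => T r * sin v)).
      eapply filter_imp; [|exact hl]; intros r hr; simpl. rewrite hr. reflexivity.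
      apply ex_derive_mult; auto. apply ex_derive_const.
    * apply (ex_derive_ext_loc Z).
      eapply filter_imp; [|exact hl]; intros r hr; simpl. rewrite hr. reflexivity. auto.
    * apply (ex_derive_ext (fun w => T s * cos w)). intro w; rewrite h0; reflexivity. auto_derive; auto.
    * apply (ex_derive_ext (fun w => T s * sin w)). intro w; rewrite h0; reflexivity. auto_derive; auto.
    * apply (ex_derive_ext (fun w => Z s)). intro w; rewrite h0; reflexivity. apply ex_derive_const.
  + exists (Derive T s), 0, 0, (T s / s). split; [|split].
    * unfold vadd, vscale; cbn [Defs.c1 c2 c3]. f_equal; try ring. rewrite hZT; ring.
    * unfold vadd, vscale; cbn [Defs.c1 c2 c3]. f_equal; field; lra.
    * rewrite h. lra.
Qed.

Lemma ZT_deriv m p T Z s : (1 <= m)%nat ->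
  locally s (fun r => T r ^ (2 * m) + Z r ^ (2 * m) = 1) ->
  ex_derive T s -> ex_derive Z s ->
  T s ^ (pred (2 * m)) = - Z s ^ (pred (2 * m)) * p -> 0 < Z s ->
  Derive Z s = p * Derive T s.
Proof.
intros hm hl hT hZ hr hz.
assert (e0 : Derive (fun r => T r ^ (2 * m) + Z r ^ (2 * m)) s = 0).
{ rewrite (Derive_ext_loc _ (fun _ => 1)) by exact hl. apply Derive_const. }
assert (e1 : Derive (fun r => T r ^ (2 * m) + Z r ^ (2 * m)) s =
   INR (2 * m) * T s ^ (pred (2 * m)) * Derive T s + INR (2 * m) * Z s ^ (pred (2 * m)) * Derive Z s).
{ apply is_derive_unique. auto_derive; auto. change (m + (m + 0))%nat with (2 * m)%nat. change (fun x : R => T x) with T. change (fun x : R => Z x) with Z. ring. }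
rewrite e1, hr in e0. rewrite INR2m in e0.
assert (hzN : 0 < Z s ^ pred (2 * m)) by (apply pow_lt; auto).
assert (hm' : 0 < INR m) by (apply lt_0_INR; lia).
assert (2 * INR m * Z s ^ pred (2 * m) * (Derive Z s - p * Derive T s) = 0) by lra.
apply Rmult_integral in H. destruct H as [H|H]; [|lra].
apply Rmult_integral in H. destruct H; nra.
Qed.

Definition eexp m := (INR (2 * m) - 1) / INR (2 * m).
Definition gfun m k s := k * Rpower (1 + s ^ (2 * m)) (- eexp m).
Definition qfun m k x := x ^ (2 * m) / k ^ (2 * m) - 1.
Definition Sfun m k x := Rpower (qfun m k x) (/ INR (2 * m)).
Definition Gfun m k x := RInt (gfun m k) 0 (Sfun m k x).

Lemma INR2m_pos m : (1 <= m)%nat -> 0 < INR (2 * m).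
Proof. intros; apply lt_0_INR; lia. Qed.

Lemma Rpower_pow_e m y : (1 <= m)%nat -> 0 < y -> Rpower (y ^ (2 * m)) (eexp m) = y ^ (pred (2 * m)).
Proof.
intros hm hy. rewrite <- Rpower_pow by auto. rewrite Rpower_mult.
rewrite <- Rpower_pow by auto. f_equal.
replace (pred (2 * m)) with (2 * m - 1)%nat by lia. rewrite minus_INR by lia.
unfold eexp. pose proof (INR2m_pos m hm). simpl (INR 1). field. lra.
Qed.

Lemma is_derive_Rpow c y : 0 < y -> is_derive (fun z => Rpower z c) y (c * Rpower y (c - 1)).
Proof. intros. apply is_derive_Reals. apply derivable_pt_lim_power. auto. Qed.

Lemma pow2m_nonneg m s : 0 <= s ^ (2 * m).
Proof. rewrite pow_mult. apply pow_le. nra. Qed.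

Lemma g_cont m k (s : R) : continuous (gfun m k) s.
Proof.
apply (ex_derive_continuous (gfun m k)). unfold gfun, Rpower. auto_derive.
change (m + (m + 0))%nat with (2 * m)%nat. pose proof (pow2m_nonneg m s). lra.
Qed.

Lemma g_bounds m k s : (1 <= m)%nat -> 0 < k -> 0 < gfun m k s <= k.
Proof.
intros hm hk. unfold gfun. pose proof (pow2m_nonneg m s).
assert (hp : 0 < Rpower (1 + s ^ (2 * m)) (- eexp m)) by (unfold Rpower; apply exp_pos).
split. apply Rmult_lt_0_compat; auto.
rewrite Rpower_Ropp.
assert (1 <= Rpower (1 + s ^ (2 * m)) (eexp m)).
{ apply Rle_trans with (Rpower (1 + s ^ (2 * m)) 0); [rewrite Rpower_O; lra|].
  apply Rle_Rpower; [lra|].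
  unfold eexp. apply Rdiv_le_0_compat; [|apply INR2m_pos; auto].
  assert (1 <= INR (2 * m)) by (apply (le_INR 1); lia). lra. }
rewrite <- (Rmult_1_r k) at 2. apply Rmult_le_compat_l; [lra|].
set (X := Rpower (1 + s ^ (2 * m)) (eexp m)) in *.
apply Rmult_le_reg_l with X; [lra|]. rewrite Rinv_r; lra.
Qed.

Lemma q_pos m k x : (1 <= m)%nat -> 0 < k < x -> 0 < qfun m k x.
Proof.
intros hm [hk hx]. unfold qfun.
assert (k ^ (2 * m) < x ^ (2 * m)).
{ replace (2 * m)%nat with (S (pred (2 * m))) by lia. 
  assert (forall n a b, 0 <= a < b -> a ^ S n < b ^ S n).
  { intros n a b [h0 h1]. induction n. simpl; lra.
    assert (0 <= a ^ S n) by (apply pow_le; lra).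
    change (a * a ^ S n < b * b ^ S n).
    apply Rle_lt_trans with (a * b ^ S n). apply Rmult_le_compat_l; lra.
    apply Rmult_lt_compat_r; [apply pow_lt; lra | lra]. }
  apply H; lra. }
assert (0 < k ^ (2 * m)) by (apply pow_lt; auto).
apply Rlt_Rminus. apply (Rmult_lt_reg_r (k ^ (2 * m))); auto. field_simplify; lra.
Qed.

Lemma S_pow m k x : (1 <= m)%nat -> 0 < k < x -> Sfun m k x ^ (2 * m) = qfun m k x.
Proof.
intros hm hx. pose proof (q_pos m k x hm hx). unfold Sfun.
rewrite <- Rpower_pow by (unfold Rpower; apply exp_pos).
rewrite Rpower_mult. rewrite Rinv_l. apply Rpower_1; auto.
pose proof (INR2m_pos m hm). lra.
Qed.

Lemma S_pos m k x : 0 < Sfun m k x.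
Proof. unfold Sfun, Rpower. apply exp_pos. Qed.

Lemma G_deriv m k x : (1 <= m)%nat -> 0 < k < x -> is_derive (Gfun m k) x (integrand m k x).
Proof.
intros hm hx. pose proof (q_pos m k x hm hx) as hq. pose proof (INR2m_pos m hm) as hn.
assert (hk2 : 0 < k ^ (2 * m)) by (apply pow_lt; lra).
assert (dq : is_derive (qfun m k) x (INR (2 * m) * x ^ pred (2 * m) / k ^ (2 * m))).
{ unfold qfun. auto_derive. lra. change (m + (m + 0))%nat with (2 * m)%nat. field. lra. }
assert (dS : is_derive (Sfun m k) x
   (INR (2 * m) * x ^ pred (2 * m) / k ^ (2 * m) * (/ INR (2 * m) * Rpower (qfun m k x) (/ INR (2 * m) - 1)))).
{ unfold Sfun. apply (is_derive_comp (fun z => Rpower z (/ INR (2 * m))) (qfun m k)); auto.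
  apply is_derive_Rpow; auto. }
assert (dI : is_derive (fun y => RInt (gfun m k) 0 y) (Sfun m k x) (gfun m k (Sfun m k x))).
{ apply (is_derive_RInt (gfun m k) (fun y => RInt (gfun m k) 0 y) 0). apply filter_forall. intros y.
  exact (RInt_correct (gfun m k) 0 y (ex_RInt_continuous (gfun m k) 0 y (fun z _ => g_cont m k z))).
  apply g_cont. }
pose proof (is_derive_comp _ _ _ _ _ dI dS) as h. unfold Gfun.
replace (integrand m k x) with (scal (INR (2 * m) * x ^ pred (2 * m) / k ^ (2 * m) * (/ INR (2 * m) * Rpower (qfun m k x) (/ INR (2 * m) - 1))) (gfun m k (Sfun m k x))).
exact h.
unfold scal; simpl; unfold mult; simpl. change (m + (m + 0))%nat with (2 * m)%nat.
unfold gfun. rewrite S_pow by auto.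
assert (e1 : 1 + qfun m k x = (x / k) ^ (2 * m)).
{ unfold qfun. unfold Rdiv. rewrite Rpow_mult_distr, pow_inv. field. lra. }
rewrite e1. rewrite Rpower_Ropp, Rpower_pow_e by (auto; apply Rdiv_lt_0_compat; lra).
assert (e2 : / INR (2 * m) - 1 = - eexp m) by (unfold eexp; field; lra).
rewrite e2, Rpower_Ropp.
unfold integrand.
assert (e3 : x ^ (2 * m) - k ^ (2 * m) = k ^ (2 * m) * qfun m k x) by (unfold qfun; field; lra).
rewrite e3. rewrite <- Rpower_mult_distr by auto. 
rewrite Rpower_pow_e by first [assumption | lra].
replace (2 * m - 1)%nat with (pred (2 * m)) by lia.
assert (0 < Rpower (qfun m k x) (eexp m)) by (unfold Rpower; apply exp_pos).
assert (0 < x ^ pred (2 * m)) by (apply pow_lt; lra).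
assert (0 < k ^ pred (2 * m)) by (apply pow_lt; lra).
replace (k ^ (2 * m)) with (k * k ^ pred (2 * m)) by (rewrite tech_pow_Rmult; f_equal; lia).
change ((INR (2 * m) - 1) / INR (2 * m)) with (eexp m). unfold Rdiv. rewrite Rpow_mult_distr, pow_inv. field. repeat split; lra.
Qed.

Lemma integrand_cont m k t : (1 <= m)%nat -> 0 < k < t -> continuous (integrand m k) t.
Proof.
intros hm ht. pose proof (q_pos m k t hm ht) as hq.
assert (hk2 : 0 < k ^ (2 * m)) by (apply pow_lt; lra).
assert (hd : t ^ (2 * m) - k ^ (2 * m) > 0).
{ unfold qfun in hq. apply Rmult_lt_compat_r with (r := k ^ (2 * m)) in hq; auto.
  unfold Rdiv in hq. rewrite Rmult_minus_distr_r, Rmult_assoc, Rinv_l in hq; lra. }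
apply (ex_derive_continuous (integrand m k)). unfold integrand, Rpower.
auto_derive. change (m + (m + 0))%nat with (2 * m)%nat. split; [lra|].
split; auto. apply Rgt_not_eq, exp_pos.
Qed.

Lemma G_lim m k : (1 <= m)%nat -> 0 < k -> filterlim (Gfun m k) (at_right k) (locally 0).
Proof.
intros hm hk. apply filterlim_locally. intros eps.
assert (hd : 0 < (eps / k) ^ (2 * m)) by (apply pow_lt; apply Rdiv_lt_0_compat; [apply cond_pos|lra]).
assert (hc : continuous (qfun m k) k).
{ apply (ex_derive_continuous (qfun m k)). unfold qfun. auto_derive.
  change (m + (m + 0))%nat with (2 * m)%nat. lra. }
assert (hq0 : qfun m k k = 0) by (unfold qfun; field; apply pow_nonzero; lra).
unfold continuous in hc. rewrite hq0 in hc. apply (proj1 (filterlim_locally _ _)) with (eps := mkposreal _ hd) in hc.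
unfold at_right, within. eapply filter_imp; [|exact hc].
intros y hy hky. simpl in hy |- *. change (Rabs (Gfun m k y - 0) < eps).
change (Rabs (qfun m k y - 0) < (eps / k) ^ (2 * m)) in hy.
rewrite Rminus_0_r in *.
pose proof (S_pos m k y) as hS.
assert (hSe : Sfun m k y < eps / k).
{ destruct (Rlt_le_dec (Sfun m k y) (eps / k)) as [h|h]; auto.
  assert ((eps / k) ^ (2 * m) <= Sfun m k y ^ (2 * m)).
  { apply pow_incr. split; auto. apply Rlt_le, Rdiv_lt_0_compat; [apply cond_pos|lra]. }
  rewrite S_pow in H by (auto; lra). apply Rabs_def2 in hy. lra. }
unfold Gfun.
apply Rle_lt_trans with ((Sfun m k y - 0) * k).
- apply abs_RInt_le_const. lra.
  exact (ex_RInt_continuous (gfun m k) 0 _ (fun z _ => g_cont m k z)).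
  intros t _. pose proof (g_bounds m k t hm hk). rewrite Rabs_pos_eq; lra.
- rewrite Rminus_0_r. apply Rmult_lt_reg_r with (/ k). apply Rinv_0_lt_compat; lra.
  rewrite Rmult_assoc, Rinv_r by lra. lra.
Qed.

Lemma G_int m k x : (1 <= m)%nat -> 0 < k < x ->
  is_RInt_gen (integrand m k) (at_right k) (at_point x) (Gfun m k x).
Proof.
intros hm hx.
assert (hfp : forall P : R * R -> Prop, (forall y, k < y -> P (y, x)) ->
          filter_prod (at_right k) (at_point x) P).
{ intros P HP. exists (fun y => k < y) (fun z => z = x).
  - unfold at_right, within. apply filter_forall. auto.
  - reflexivity.
  - intros y z hy hz. subst z. apply HP; auto. }
apply is_RInt_gen_ext with (Derive (Gfun m k)).
{ apply hfp. intros y hy t ht. simpl in ht. apply is_derive_unique, G_deriv; auto.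
  split; [lra|]. destruct ht as [ht1 ht2]. apply Rle_lt_trans with (Rmin y x); auto.
  apply Rmin_glb; lra. }
replace (Gfun m k x) with (Gfun m k x - 0) by ring.
apply is_RInt_gen_Derive.
- apply hfp. intros y hy t ht. simpl in ht. exists (integrand m k t). apply G_deriv; auto.
  split; [lra|]. destruct ht as [ht1 ht2]. apply Rlt_le_trans with (Rmin y x); auto.
  apply Rmin_glb_lt; lra.
- apply hfp. intros y hy t ht. simpl in ht.
  assert (htk : k < t). { destruct ht as [ht1 ht2]. apply Rlt_le_trans with (Rmin y x); auto.
  apply Rmin_glb_lt; lra. }
  apply continuous_ext_loc with (integrand m k).
  + apply locally_interval with k p_infty; simpl; auto.
    intros z hz _. symmetry. apply is_derive_unique, G_deriv; auto. split; lra.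
  + apply integrand_cont; auto. lra.
- apply G_lim; auto. lra.
- intros P HP. apply locally_singleton in HP. exact HP.
Qed.

Definition t0f (sg k s : R) := - sg * k / s.
Definition z0f m (k s : R) := Rpower (s ^ (2 * m) - k ^ (2 * m)) (/ INR (2 * m)) / s.

Lemma sg_pow sg n : (sg = 1 \/ sg = -1) -> sg ^ (2 * n) = 1.
Proof. intros [h|h]; subst; rewrite pow_mult; replace ((_) ^ 2) with 1 by ring; apply pow1. Qed.

Lemma sg_pow_odd sg m : (1 <= m)%nat -> (sg = 1 \/ sg = -1) -> sg ^ pred (2 * m) = sg.
Proof.
intros hm h. rewrite odd_exp by auto. rewrite pow_add, sg_pow by auto. ring.
Qed.

Lemma diff_pos m k s : (1 <= m)%nat -> 0 < k < s -> 0 < s ^ (2 * m) - k ^ (2 * m).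
Proof.
intros hm hs. pose proof (q_pos m k s hm hs) as hq. unfold qfun in hq.
assert (hk2 : 0 < k ^ (2 * m)) by (apply pow_lt; lra).
apply Rmult_lt_compat_r with (r := k ^ (2 * m)) in hq; auto.
unfold Rdiv in hq. rewrite Rmult_minus_distr_r, Rmult_assoc, Rinv_l in hq; lra.
Qed.

Lemma explicit_TZ m sg k s : (1 <= m)%nat -> (sg = 1 \/ sg = -1) -> 0 < k < s ->
  t0f sg k s ^ (2 * m) + z0f m k s ^ (2 * m) = 1 /\
  t0f sg k s ^ pred (2 * m) = - z0f m k s ^ pred (2 * m) * (sg * integrand m k s) /\
  0 < z0f m k s.
Proof.
intros hm hsg hs. pose proof (diff_pos m k s hm hs) as hD.
set (D := s ^ (2 * m) - k ^ (2 * m)) in *.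
pose proof (INR2m_pos m hm) as hn.
set (Rr := Rpower D (/ INR (2 * m))).
assert (hR : 0 < Rr) by (unfold Rr, Rpower; apply exp_pos).
assert (hR2 : Rr ^ (2 * m) = D).
{ unfold Rr. rewrite <- Rpower_pow by auto. rewrite Rpower_mult, Rinv_l by lra. apply Rpower_1; auto. }
assert (hRN : Rr ^ pred (2 * m) = Rpower D (eexp m)).
{ unfold Rr. rewrite <- Rpower_pow by auto. rewrite Rpower_mult. f_equal.
  replace (pred (2 * m)) with (2 * m - 1)%nat by lia. rewrite minus_INR by lia.
  unfold eexp. simpl (INR 1). field. lra. }
assert (hsp : 0 < s) by lra.
unfold t0f, z0f. fold D. fold Rr. split; [|split].
- unfold Rdiv. rewrite !Rpow_mult_distr, !pow_inv.
  replace (- sg) with ((-1) * sg) by ring. rewrite !Rpow_mult_distr, !sg_pow by auto.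
  rewrite hR2. unfold D. field. apply pow_nonzero; lra.
- unfold integrand. change ((INR (2 * m) - 1) / INR (2 * m)) with (eexp m). fold D.
  replace (2 * m - 1)%nat with (pred (2 * m)) by lia.
  assert (0 < Rpower D (eexp m)) by (unfold Rpower; apply exp_pos).
  unfold Rdiv. rewrite !Rpow_mult_distr, !pow_inv.
  replace (- sg) with ((-1) * sg) by ring. rewrite !Rpow_mult_distr, (sg_pow_odd sg m), (sg_pow_odd (-1) m), hRN by auto.
  field. split; [lra|]. apply pow_nonzero; lra.
- apply Rdiv_lt_0_compat; auto.
Qed.

Lemma deriv0_const (a : R) (b : Rbar) (h : R -> R) :
  (forall x, a < x -> Rbar_lt x b -> is_derive h x 0) ->
  forall x y, a < x -> Rbar_lt x b -> a < y -> Rbar_lt y b -> h x = h y.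
Proof.
intros hd x y hx hxb hy hyb.
assert (hin : forall c, Rmin x y <= c <= Rmax x y -> a < c /\ Rbar_lt c b).
{ intros c [h1 h2]. split.
  - apply Rlt_le_trans with (Rmin x y); auto. apply Rmin_glb_lt; auto.
  - apply Rbar_le_lt_trans with (Rmax x y). simpl; auto.
    destruct (Rle_dec x y); [rewrite Rmax_right by lra; auto | rewrite Rmax_left by lra; auto]. }
destruct (MVT_gen h x y (fun _ => 0)) as [c [_ hc]].
- intros z hz. apply hd; apply hin; lra.
- intros z hz. apply continuity_pt_filterlim. apply (ex_derive_continuous h).
  exists 0. apply hd; apply hin; auto.
- lra.
Qed.

Lemma J_nonempty (a : R) (b : Rbar) : Rbar_lt a b -> exists x0, a < x0 /\ Rbar_lt x0 b.
Proof.
intros hab. destruct b as [bb| |]; simpl in hab.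
- exists ((a + bb) / 2). simpl. split; lra.
- exists (a + 1). simpl. split; [lra|auto].
- contradiction.
Qed.

Definition wf m y := y * Rpower (y ^ 2) (- INR (pred m) / INR (pred (2 * m))).
Definition Wf m y := Rpower (y ^ 2) (INR m / INR (pred (2 * m))).
Definition zf m y := Rpower (1 + Wf m y) (- / INR (2 * m)).
Definition Tf m y := - wf m y * zf m y.

Lemma Tf_props m y : (1 <= m)%nat -> y <> 0 ->
  Tf m y ^ (2 * m) + zf m y ^ (2 * m) = 1 /\
  Tf m y ^ pred (2 * m) = - zf m y ^ pred (2 * m) * y /\ 0 < zf m y.
Proof.
intros hm hy.
assert (hY : 0 < y ^ 2) by (simpl; rewrite Rmult_1_r; apply Rsqr_pos_lt; auto).
assert (hN : 0 < INR (pred (2 * m))) by (apply lt_0_INR; lia).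
assert (hn : 0 < INR (2 * m)) by (apply INR2m_pos; auto).
assert (hwN : wf m y ^ pred (2 * m) = y).
{ unfold wf. rewrite Rpow_mult_distr. rewrite <- (Rpower_pow (pred (2 * m)) (Rpower _ _)) by (unfold Rpower; apply exp_pos).
  rewrite Rpower_mult.
  replace (- INR (pred m) / INR (pred (2 * m)) * INR (pred (2 * m))) with (- INR (pred m)) by (field; lra).
  rewrite Rpower_Ropp, Rpower_pow by auto.
  rewrite odd_exp by auto. rewrite pow_add, pow_mult. field. apply pow_nonzero; lra. }
assert (hW : wf m y ^ (2 * m) = Wf m y).
{ rewrite pow_2m_split by auto. rewrite hwN. unfold wf, Wf.
  transitivity (Rpower (y ^ 2) 1 * Rpower (y ^ 2) (- INR (pred m) / INR (pred (2 * m)))).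
  { rewrite Rpower_1 by auto. ring. }
  rewrite <- Rpower_plus. f_equal.
  assert (e : INR (pred (2 * m)) = INR (pred m) + INR m) by (rewrite <- plus_INR; f_equal; lia).
  rewrite e in *. field. lra. }
assert (hz : 0 < zf m y) by (unfold zf, Rpower; apply exp_pos).
assert (hWp : 0 < Wf m y) by (unfold Wf, Rpower; apply exp_pos).
assert (hz2 : zf m y ^ (2 * m) = / (1 + Wf m y)).
{ unfold zf. rewrite <- Rpower_pow by auto. rewrite Rpower_mult.
  replace (- / INR (2 * m) * INR (2 * m)) with (- (1)) by (field; lra).
  rewrite Rpower_Ropp, Rpower_1 by lra. reflexivity. }
unfold Tf. split; [|split; auto].
- rewrite Rpow_mult_distr. replace (- wf m y) with ((-1) * wf m y) by ring.
  rewrite Rpow_mult_distr, sg_pow, hW, hz2 by auto. field. lra.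
- rewrite Rpow_mult_distr. replace (- wf m y) with ((-1) * wf m y) by ring.
  rewrite Rpow_mult_distr, sg_pow_odd, hwN by auto. ring.
Qed.

Lemma Tf_deriv m y : y <> 0 -> ex_derive (Tf m) y /\ ex_derive (zf m) y.
Proof.
intros hy.
assert (hY : 0 < y ^ 2) by (simpl; rewrite Rmult_1_r; apply Rsqr_pos_lt; auto).
unfold Tf, zf, wf, Wf, Rpower. split; auto_derive; repeat split.
all: simpl in hY; try lra.
all: match goal with |- context [exp ?e] => pose proof (exp_pos e); lra end.
Qed.


Lemma z0f_deriv m k s : (1 <= m)%nat -> 0 < k < s -> ex_derive (z0f m k) s.
Proof.
intros hm hs. pose proof (diff_pos m k s hm hs).
unfold z0f, Rpower. auto_derive. change (m + (m + 0))%nat with (2 * m)%nat. split; [lra|]. lra.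
Qed.

Lemma t0f_deriv sg k s : 0 < s -> is_derive (t0f sg k) s (sg * k / s ^ 2).
Proof. intros hs. unfold t0f. auto_derive. lra. field. lra. Qed.

Theorem theorem4p1 (m : nat) (hm : (2 <= m)%nat)
  (a : R) (b : Rbar) (ha : 0 <= a) (hab : Rbar_lt a b)
  (u : R -> R)
  (hsmooth : forall (n : nat) (x : R), a < x -> Rbar_lt x b -> ex_derive_n u n x)
  (hu' : forall x : R, a < x -> Rbar_lt x b -> Derive u x <> 0) :
  BG_minimal m (rot_surface u) (fun s _ => a < s /\ Rbar_lt s b)
  <->
  exists (k2 k3 sigma : R),
    0 < k2 /\ (sigma = 1 \/ sigma = -1) /\
    (forall x : R, a < x -> Rbar_lt x b -> k2 < x) /\
    (forall x : R, a < x -> Rbar_lt x b ->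
       exists I : R,
         is_RInt_gen (integrand m k2) (at_right k2) (at_point x) I /\
         u x = sigma * I + k3).
Proof.
assert (hm1 : (1 <= m)%nat) by lia.
assert (hdu : forall s, a < s -> Rbar_lt s b -> ex_derive u s).
{ intros s h1 h2. exact (hsmooth 1%nat s h1 h2). }
assert (hddu : forall s, a < s -> Rbar_lt s b -> ex_derive (Derive u) s).
{ intros s h1 h2. exact (hsmooth 2%nat s h1 h2). }
assert (hloc : forall s, a < s -> Rbar_lt s b -> forall P : R -> Prop,
          (forall r, a < r -> Rbar_lt r b -> P r) -> locally s P).
{ intros s h1 h2 P HP. apply locally_interval with a b; auto. }
split.
- intros Hmin.
  set (T0 := fun s => Tf m (Derive u s)). set (Z0 := fun s => zf m (Derive u s)).
  set (eta0 := fun s v => mkV (T0 s * cos v) (T0 s * sin v) (Z0 s)).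
  assert (hBG : is_BG_map m (rot_surface u) (fun s _ => a < s /\ Rbar_lt s b) eta0).
  { intros s v [h1 h2]. apply BG_rot; auto; [lra|].
    exists (T0 s), (Z0 s). split; [reflexivity|]. apply Tf_props; auto. }
  assert (hprop : forall s, a < s -> Rbar_lt s b ->
     T0 s ^ (2 * m) + Z0 s ^ (2 * m) = 1 /\
     T0 s ^ pred (2 * m) = - Z0 s ^ pred (2 * m) * Derive u s /\ 0 < Z0 s).
  { intros s h1 h2. apply Tf_props; auto. }
  assert (hdT : forall s, a < s -> Rbar_lt s b -> ex_derive T0 s /\ ex_derive Z0 s).
  { intros s h1 h2. destruct (Tf_deriv m (Derive u s) (hu' s h1 h2)) as [d1 d2]. split.
    - apply (ex_derive_comp (Tf m) (Derive u) s d1 (hddu s h1 h2)).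
    - apply (ex_derive_comp (zf m) (Derive u) s d2 (hddu s h1 h2)). }
  assert (hkey : forall s, a < s -> Rbar_lt s b -> Derive T0 s + T0 s / s = 0).
  { intros s h1 h2. destruct (hdT s h1 h2) as [d1 d2]. destruct (hprop s h1 h2) as [p1 [p2 p3]].
    assert (Hl : locally s (fun r => forall w, eta0 r w = mkV (T0 r * cos w) (T0 r * sin w) (Z0 r))).
    { apply filter_forall. intros r w. reflexivity. }
    assert (HZ : Derive Z0 s = Derive u s * Derive T0 s).
    { apply (ZT_deriv m (Derive u s) T0 Z0 s hm1); auto.
      apply hloc; auto. intros r r1 r2. apply (hprop r r1 r2). }
    apply (proj1 (mc_lemma u eta0 T0 Z0 s 0 ltac:(lra) (hu' s h1 h2) Hl d1 d2 HZ)).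
    apply Hmin; auto. }
  clearbody eta0 T0 Z0.
  destruct (J_nonempty a b hab) as [x0 [hx0a hx0b]].
  set (C := x0 * T0 x0).
  assert (hC : forall s, a < s -> Rbar_lt s b -> s * T0 s = C).
  { intros s h1 h2. unfold C. refine (deriv0_const a b (fun r => r * T0 r) _ s x0 h1 h2 hx0a hx0b).
    intros x hx1 hx2. destruct (hdT x hx1 hx2) as [d1 d2].
    replace 0 with (T0 x + x * Derive T0 x).
    - auto_derive; auto. change (fun x : R => T0 x) with T0. ring.
    - pose proof (hkey x hx1 hx2). assert (0 < x) by lra.
      replace (T0 x + x * Derive T0 x) with (x * (Derive T0 x + T0 x / x)) by (field; lra).
      rewrite H; ring. }
  assert (hT0ne : forall s, a < s -> Rbar_lt s b -> T0 s <> 0).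
  { intros s h1 h2 e. destruct (hprop s h1 h2) as [_ [p2 p3]]. rewrite e in p2.
    rewrite pow_i in p2 by lia.
    assert (hh : Z0 s ^ pred (2 * m) * Derive u s = 0) by lra.
    apply Rmult_integral in hh. destruct hh as [hh|hh].
    - pose proof (pow_lt (Z0 s) (pred (2 * m)) p3); lra.
    - apply (hu' s h1 h2); auto. }
  assert (hCne : C <> 0).
  { unfold C. apply Rmult_integral_contrapositive. split; [lra|]. apply hT0ne; auto. }
  set (k2 := Rabs C).
  set (sg := if Rlt_dec 0 C then -1 else 1).
  assert (hsg : sg = 1 \/ sg = -1) by (unfold sg; destruct Rlt_dec; auto).
  assert (hCk : C = - sg * k2).
  { unfold sg, k2. destruct (Rlt_dec 0 C).
    - rewrite Rabs_pos_eq; lra.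
    - rewrite Rabs_left; lra. }
  assert (hk2 : 0 < k2) by (unfold k2; apply Rabs_pos_lt; auto).
  assert (hT0 : forall s, a < s -> Rbar_lt s b -> T0 s = t0f sg k2 s).
  { intros s h1 h2. unfold t0f. rewrite <- hCk. rewrite <- (hC s h1 h2). field. lra. }
  assert (hk2s : forall s, a < s -> Rbar_lt s b -> k2 < s).
  { intros s h1 h2. destruct (hprop s h1 h2) as [p1 [_ p3]].
    assert (hlt : T0 s ^ (2 * m) < 1) by (pose proof (pow_lt _ (2 * m) p3); lra).
    assert (hab1 : Rabs (T0 s) < 1).
    { destruct (Rlt_le_dec (Rabs (T0 s)) 1) as [h|h]; auto. exfalso.
      assert (hh : 1 ^ (2 * m) <= Rabs (T0 s) ^ (2 * m)) by (apply pow_incr; lra).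
      rewrite pow1, RPow_abs, Rabs_pos_eq in hh by (apply pow2m_nonneg). lra. }
    rewrite hT0 in hab1 by auto. unfold t0f, Rdiv in hab1.
    rewrite Rabs_mult, Rabs_inv, (Rabs_pos_eq s) in hab1 by lra.
    replace (Rabs (- sg * k2)) with k2 in hab1.
    - apply Rmult_lt_reg_r with (/ s). apply Rinv_0_lt_compat; lra. rewrite Rinv_r by lra. lra.
    - rewrite Rabs_mult, (Rabs_pos_eq k2) by lra.
      destruct hsg as [e|e]; rewrite e; [rewrite Rabs_Ropp|]; rewrite ?Rabs_R1; 
        try (replace (- -1) with 1 by ring; rewrite Rabs_R1); ring. }
  assert (hp : forall s, a < s -> Rbar_lt s b -> Derive u s = sg * integrand m k2 s).
  { intros s h1 h2. destruct (hprop s h1 h2) as [p1 [p2 p3]].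
    destruct (explicit_TZ m sg k2 s hm1 hsg (conj hk2 (hk2s s h1 h2))) as [f1 [f2 f3]].
    rewrite hT0 in p1, p2 by auto.
    assert (hZ : Z0 s = z0f m k2 s).
    { apply (pow_pos_inj (pred (2 * m))); auto. replace (S (pred (2 * m))) with (2 * m)%nat by lia. lra. }
    rewrite hZ in p2. rewrite p2 in f2.
    assert (0 < z0f m k2 s ^ pred (2 * m)) by (apply pow_lt; auto).
    apply Rmult_eq_reg_l with (- z0f m k2 s ^ pred (2 * m)). exact f2. lra. }
  exists k2, (u x0 - sg * Gfun m k2 x0), sg. split; [auto|split; [auto|split; [exact hk2s|]]].
  intros x hx1 hx2. exists (Gfun m k2 x). split.
  + apply G_int; auto.
  + assert (E : u x - sg * Gfun m k2 x = u x0 - sg * Gfun m k2 x0).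
    { refine (deriv0_const a b (fun r => u r - sg * Gfun m k2 r) _ x x0 hx1 hx2 hx0a hx0b).
      intros r r1 r2.
      assert (dG := G_deriv m k2 r hm1 (conj hk2 (hk2s r r1 r2))).
      replace 0 with (Derive u r - sg * integrand m k2 r) by (rewrite hp; auto; ring).
      apply (is_derive_minus u (fun r => sg * Gfun m k2 r)). apply Derive_correct; auto.
      apply is_derive_scal; auto. }
    lra.
- intros [k2 [k3 [sg [hk [hsg [hks hI]]]]]].
  assert (huG : forall s, a < s -> Rbar_lt s b -> u s = sg * Gfun m k2 s + k3).
  { intros s h1 h2. destruct (hI s h1 h2) as [I [hI1 hI2]].
    pose proof (G_int m k2 s hm1 (conj hk (hks s h1 h2))) as hG.
    assert (u1 := @is_RInt_gen_unique R_CompleteNormedModule (at_right k2) (at_point s) _ _ _ _ hI1).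
    assert (u2 := @is_RInt_gen_unique R_CompleteNormedModule (at_right k2) (at_point s) _ _ _ _ hG).
    rewrite hI2, <- u1, u2. reflexivity. }
  assert (hp : forall s, a < s -> Rbar_lt s b -> Derive u s = sg * integrand m k2 s).
  { intros s h1 h2. apply is_derive_unique.
    apply is_derive_ext_loc with (fun r => sg * Gfun m k2 r + k3).
    - apply hloc; auto. intros r r1 r2. symmetry. apply huG; auto.
    - assert (dG := G_deriv m k2 s hm1 (conj hk (hks s h1 h2))).
      auto_derive. exists (integrand m k2 s); auto.
      change (fun x : R => Gfun m k2 x) with (Gfun m k2). rewrite (is_derive_unique _ _ _ dG). ring. }
  assert (hTZ : forall s, a < s -> Rbar_lt s b ->
     t0f sg k2 s ^ (2 * m) + z0f m k2 s ^ (2 * m) = 1 /\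
     t0f sg k2 s ^ pred (2 * m) = - z0f m k2 s ^ pred (2 * m) * Derive u s /\ 0 < z0f m k2 s).
  { intros s h1 h2. rewrite hp by auto. apply explicit_TZ; auto. }
  intros eta heta s v [h1 h2].
  assert (heq : forall r, a < r -> Rbar_lt r b -> forall w,
     eta r w = mkV (t0f sg k2 r * cos w) (t0f sg k2 r * sin w) (z0f m k2 r)).
  { intros r r1 r2 w.
    assert (hr : 0 < r) by lra.
    destruct (proj1 (BG_rot m u r w (eta r w) hm1 hr (hu' r r1 r2)) (heta r w (conj r1 r2)))
      as [T [Z [hX [e1 [e2 e3]]]]].
    destruct (hTZ r r1 r2) as [f1 [f2 f3]].
    destruct (TZ_unique m (Derive u r) T Z _ _ hm1 e1 e2 e3 f1 f2 f3) as [-> ->]. exact hX. }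
  assert (hs : 0 < s) by lra.
  assert (hks' : 0 < k2 < s) by (split; auto).
  destruct (hTZ s h1 h2) as [f1 [f2 f3]].
  assert (dt := t0f_deriv sg k2 s hs).
  assert (dz := z0f_deriv m k2 s hm1 hks').
  assert (HZ : Derive (z0f m k2) s = Derive u s * Derive (t0f sg k2) s).
  { apply (ZT_deriv m (Derive u s) (t0f sg k2) (z0f m k2) s hm1); auto.
    - apply hloc; auto. intros r r1 r2. apply (hTZ r r1 r2).
    - exists (sg * k2 / s ^ 2); auto. }
  apply (proj2 (mc_lemma u eta (t0f sg k2) (z0f m k2) s v hs (hu' s h1 h2)
     (hloc s h1 h2 _ heq) (ex_intro _ _ dt) dz HZ)).
  rewrite (is_derive_unique _ _ _ dt). unfold t0f. field. lra.
Qed.
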